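(* Let $\alpha,\beta$ be compositions with $\beta\subseteq\alpha$, let $n=|\alpha/\beta|$, and let $M\in\mathrm{SET}(\alpha/\beta)$. Then $M$ is a minimal element of the poset $\mathrm{SET}(\alpha/\beta)$ if and only if, for every $i=1,2,\ldots,n-1$, one of the following holds in $M$: (1) $i$ and $i+1$ lie in consecutive cells of the same row of $\alpha/\beta$; (2) $i$ and $i+1$ lie in the same column of $\alpha/\beta$ (with $i+1$ above $i$ and no cell of $\alpha/\beta$ between them); (3) $i$ lies in a row of $\alpha/\beta$ strictly higher than the row of $i+1$.
   Context: A composition $\alpha=(\alpha_1,\ldots,\alpha_k)$ is a finite sequence of positive integers, $|\alpha|=\sum\alpha_i$, $\ell(\alpha)=k$. Its diagram has rows numbered from the bottom (row 1 is lowest), row $i$ consisting of the cells in columns $1,\ldots,\alpha_i$. For compositions with $\beta\subseteq\alpha$ (i.e. $\ell(\beta)\le\ell(\alpha)$ and $\beta_j\le\alpha_j$ for $j\le\ell(\beta)$), the skew diagram $\alpha/\beta$ consists of the cells in row $i$ and column $j$ with $\beta_i<j\le\alpha_i$ (where $\beta_i=0$ for $i>\ell(\beta)$); $|\alpha/\beta|=|\alpha|-|\beta|$. A standard immaculate tableau of shape $\alpha/\beta$ is a bijective filling of the cells of $\alpha/\beta$ with $1,\ldots,|\alpha/\beta|$ such that rows increase left to right and the entries in column 1 increase bottom to top; $\mathrm{SIT}(\alpha/\beta)$ is the set of these. $\mathrm{SET}(\alpha/\beta)\subseteq\mathrm{SIT}(\alpha/\beta)$ is the set of such fillings in which all rows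 increase left to right and all columns increase bottom to top (standard extended tableaux). For $1\le i\le n-1$ and $T\in\mathrm{SIT}(\alpha/\beta)$, the row-strict operator is $\pi_i(T)=T$ if $i+1$ is in a strictly higher row than $i$; $\pi_i(T)=s_i(T)$ (the tableau obtained by swapping the entries $i$ and $i+1$) if $i+1$ is in a strictly lower row than $i$; and $\pi_i(T)=0$ otherwise. This makes $\mathrm{SIT}(\alpha/\beta)$ a poset with $T\le T'$ iff $T'$ is obtained from $T$ by applying a sequence of operators $\pi_{i}$ (with all intermediate results nonzero); $\mathrm{SET}(\alpha/\beta)$ carries the induced order. An element $M$ is minimal in $\mathrm{SET}(\alpha/\beta)$ if there is no $T\in\mathrm{SET}(\alpha/\beta)$ with $T\neq M$ and $T<M$. *)

(* Defs.v *)
From mathcomp Require Import all_boot.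
Set Implicit Arguments. Unset Strict Implicit. Unset Printing Implicit Defensive.

(* A composition: finite sequence of positive integers.  alpha_i = nth 0 alpha (i-1). *)
Definition composition (a : seq nat) : bool := all (fun x => 0 < x) a.

Definition subcomp (b a : seq nat) : bool :=
  (size b <= size a) && all (fun j => nth 0 b j <= nth 0 a j) (iota 0 (size b)).

(* A cell is (row, column), both 1-indexed, rows numbered from the bottom. *)
Definition cell := (nat * nat)%type.

(* cell (r, j) belongs to alpha/beta iff 1 <= r <= l(alpha), beta_r < j <= alpha_r
   (beta_r = 0 for r > l(beta)) *)
Definition in_skew (a b : seq nat) (c : cell) : bool :=
  [&& 0 < c.1, c.1 <= size a, nth 0 b c.1.-1 < c.2 & c.2 <= nth 0 a c.1.-1].

Definition skew_cells (a b : seq nat) : seq cell :=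
  flatten [seq [seq (r.+1, j) | j <- iota (nth 0 b r).+1 (nth 0 a r - nth 0 b r)]
          | r <- iota 0 (size a)].

(* A bijective filling of alpha/beta with 1..n is encoded by the sequence w of
   cells, where w`_(k-1) is the cell containing the entry k.  It is a bijective
   filling iff w is a permutation of the cells of alpha/beta. *)
Definition tableau := seq cell.

Definition pos (w : tableau) (k : nat) : cell := nth (0, 0) w k.-1.
Definition entry (w : tableau) (c : cell) : nat := (index c w).+1.

Definition is_filling (a b : seq nat) (w : tableau) : bool :=
  perm_eq w (skew_cells a b).

Definition is_SIT (a b : seq nat) (w : tableau) : Prop :=
  is_filling a b w /\
  (forall r j j', in_skew a b (r, j) -> in_skew a b (r, j') -> j < j' ->
     entry w (r, j) < entry w (r, j')) /\
  (forall r r', in_skew a b (r, 1) -> in_skew a b (r', 1) -> r < r' ->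
     entry w (r, 1) < entry w (r', 1)).

Definition is_SET (a b : seq nat) (w : tableau) : Prop :=
  is_filling a b w /\
  (forall r j j', in_skew a b (r, j) -> in_skew a b (r, j') -> j < j' ->
     entry w (r, j) < entry w (r, j')) /\
  (forall r r' j, in_skew a b (r, j) -> in_skew a b (r', j) -> r < r' ->
     entry w (r, j) < entry w (r', j)).

Definition swap_entries (i : nat) (w : tableau) : tableau :=
  [seq (if k == i.-1 then nth (0,0) w i
        else if k == i then nth (0,0) w i.-1 else nth (0,0) w k)
  | k <- iota 0 (size w)].

(* The row-strict operator pi_i; None stands for 0. *)
Definition pi_op (i : nat) (w : tableau) : option tableau :=
  let c := pos w i in let d := pos w i.+1 in
  if c.1 < d.1 then Some w
  else if d.1 < c.1 then Some (swap_entries i w)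
  else None.

Definition pi_step (n : nat) (T T' : tableau) : Prop :=
  exists i, 0 < i /\ i < n /\ pi_op i T = Some T'.

Inductive pi_le (n : nat) : tableau -> tableau -> Prop :=
| pi_le_refl T : pi_le n T T
| pi_le_step T T' T'' : pi_step n T T' -> pi_le n T' T'' -> pi_le n T T''.

Definition skew_size (a b : seq nat) : nat := sumn a - sumn b.

Definition minimal_SET (a b : seq nat) (M : tableau) : Prop :=
  is_SET a b M /\
  ~ (exists T, is_SET a b T /\ T <> M /\ pi_le (skew_size a b) T M).

(* Main.v *)
Require Import Defs.
From mathcomp Require Import all_boot zify.
Set Implicit Arguments. Unset Strict Implicit.

Definition sw (i k : nat) := if k == i.-1 then i else if k == i then i.-1 else k.

Ltac sws := repeat match goal with |- context [?a == ?b] =>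
   lazymatch a with context [if _ then _ else _] => fail | _ =>
   lazymatch b with context [if _ then _ else _] => fail | _ =>
   case: (a =P b) => /= ? end end end.

Lemma swK i k : 0 < i -> sw i (sw i k) = k.
Proof. rewrite /sw => hi; sws; lia. Qed.

Lemma swlt i n k : 0 < i -> i < n -> k < n -> sw i k < n.
Proof. rewrite /sw => hi hn hk; sws; lia. Qed.

Lemma swlt2 i kx ky : 0 < i -> kx < ky -> ~~ ((kx == i.-1) && (ky == i)) -> sw i kx < sw i ky.
Proof. rewrite /sw => hi hk; sws; lia. Qed.

Lemma swapE i (W : tableau) :
  swap_entries i W = [seq nth (0,0) W (sw i k) | k <- iota 0 (size W)].
Proof. apply: eq_map => k; rewrite /sw; case: ifP => //; case: ifP => //. Qed.

Lemma size_swap i W : size (swap_entries i W) = size W.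
Proof. by rewrite size_map size_iota. Qed.

Lemma nth_swap i W k : k < size W ->
  nth (0,0) (swap_entries i W) k = nth (0,0) W (sw i k).
Proof. by move=> hk; rewrite swapE (nth_map 0) ?size_iota // nth_iota. Qed.

Lemma swap_perm i W : uniq W -> 0 < i -> i < size W -> perm_eq (swap_entries i W) W.
Proof.
move=> hu hi hn; apply: uniq_perm => //.
  rewrite swapE map_inj_in_uniq ?iota_uniq // => k l.
  rewrite !mem_iota /= add0n => hk hl /eqP.
  rewrite nth_uniq ?swlt // => /eqP e.
  by rewrite -(@swK i k hi) e swK.
move=> z; apply/idP/idP.
  rewrite swapE => /mapP [k]; rewrite mem_iota /= => hk ->.
  by apply: mem_nth; apply: swlt.
move=> hz; rewrite swapE; apply/mapP; exists (sw i (index z W)).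
  by rewrite mem_iota /= swlt // index_mem.
by rewrite swK // nth_index.
Qed.

Lemma index_swap i W z : uniq W -> 0 < i -> i < size W -> z \in W ->
  index z (swap_entries i W) = sw i (index z W).
Proof.
move=> hu hi hn hz.
have hk : index z W < size W by rewrite index_mem.
have e : nth (0,0) (swap_entries i W) (sw i (index z W)) = z.
  by rewrite nth_swap ?swlt // swK // nth_index.
rewrite -{1}e index_uniq // ?size_swap ?swlt //.
by rewrite (perm_uniq (swap_perm hu hi hn)).
Qed.

Lemma pos_swap1 i W : 0 < i -> i < size W -> pos (swap_entries i W) i = nth (0,0) W i.
Proof. move=> hi hn; rewrite /pos nth_swap ?size_swap; last lia. by rewrite /sw eqxx. Qed.

Lemma pos_swap2 i W : 0 < i -> i < size W -> pos (swap_entries i W) i.+1 = nth (0,0) W i.-1.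
Proof.
move=> hi hn; rewrite /pos /= nth_swap //; rewrite /sw eqxx.
by case: eqP => //; lia.
Qed.

Lemma swap_invol i W : 0 < i -> i < size W -> swap_entries i (swap_entries i W) = W.
Proof.
move=> hi hn; apply: (@eq_from_nth _ (0,0)); rewrite ?size_swap // => k hk.
by rewrite nth_swap ?size_swap // nth_swap ?swK // swlt.
Qed.

Lemma mem_skew a b c : (c \in skew_cells a b) = in_skew a b c.
Proof.
apply/flatten_mapP/idP.
  move=> [r]; rewrite mem_iota /= => hr /mapP [j]; rewrite mem_iota => hj ->.
  rewrite /in_skew /=; repeat (apply/andP; split); lia.
case: c => r j; rewrite /in_skew /= => /and4P [h1 h2 h3 h4].
exists r.-1; first by rewrite mem_iota; lia.
apply/mapP; exists j; first by rewrite mem_iota; lia.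
by rewrite prednK.
Qed.

Lemma sum_aux (a b : seq nat) : size b <= size a ->
  (forall j, j < size b -> nth 0 b j <= nth 0 a j) ->
  sumn [seq nth 0 a r - nth 0 b r | r <- iota 0 (size a)] + sumn b = sumn a.
Proof.
elim: a b => [|x a IH] [|y b] //= hs hb.
- rewrite addn0 -[1]addn0 iotaDl -map_comp.
  have := IH [::] isT (fun j (h : j < 0) => ltac:(by [])); rewrite addn0 => <-.
  by rewrite subn0; congr (_ + sumn _); apply: eq_map => r /=; rewrite !nth_nil.
- rewrite -[1]addn0 iotaDl -map_comp.
  have h0 := hb 0 isT; simpl in h0.
  have := IH b hs (fun j (h : j < size b) => hb j.+1 h) => <-.
  rewrite (@eq_map _ _ _ (fun r => nth 0 a r - nth 0 b r)); last by [].
  lia.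
Qed.

Lemma size_skew a b : subcomp b a -> size (skew_cells a b) = skew_size a b.
Proof.
move=> /andP [hs /allP ha].
rewrite /skew_cells size_flatten /shape -map_comp.
rewrite /skew_size -(sum_aux hs); last first.
  by move=> j hj; apply: ha; rewrite mem_iota.
rewrite addnK; congr sumn; apply: eq_map => r /=.
by rewrite size_map size_iota.
Qed.

Lemma pi_op_cases i W W' : pi_op i W = Some W' ->
  W' = W \/ ((pos W i.+1).1 < (pos W i).1 /\ W' = swap_entries i W).
Proof.
rewrite /pi_op; case: ifP => h1; first by case=> ->; left.
by case: ifP => h2 // [<-]; right.
Qed.

Lemma last_step n T M : pi_le n T M -> T = M \/
  exists W i, [/\ pi_le n T W, 0 < i, i < n, (pos W i.+1).1 < (pos W i).1 &
                  M = swap_entries i W].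
Proof.
elim=> [T0|T0 T1 T2 [i [hi0 [hin hop]]] H12 IH]; first by left.
case: IH => [e|[W [j [h1 h2 h3 h4 h5]]]].
  subst T2; case: (pi_op_cases hop) => [->|[hlt ->]]; first by left.
  by right; exists T0, i; split => //; constructor.
right; exists W, j; split => //. by apply: (@pi_le_step _ _ T1) => //; exists i.
Qed.

Lemma step_pres n i T T1 : pi_op i T = Some T1 -> 0 < i -> i < n -> uniq T -> size T = n ->
  perm_eq T1 T /\ forall x y, x \in T -> y \in T -> x.1 < y.1 ->
     index x T < index y T -> index x T1 < index y T1.
Proof.
move=> hop hi hin hu hs; case: (pi_op_cases hop) => [->|[hlt ->]]; first by split.
have hn : i < size T by rewrite hs.
split; first exact: swap_perm.
move=> x y hx hy hxy hidx; rewrite !index_swap //; apply: swlt2 => //.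
apply/negP => /andP [/eqP ex /eqP ey].
move: hlt; rewrite /pos /= -ex -ey !nth_index // => h; move: (ltn_trans h hxy); by rewrite ltnn.
Qed.

Lemma pres n T W : pi_le n T W -> uniq T -> size T = n ->
  perm_eq W T /\ forall x y, x \in T -> y \in T -> x.1 < y.1 ->
     index x T < index y T -> index x W < index y W.
Proof.
elim=> [T0|T0 T1 T2 [i [hi0 [hin hop]]] H12 IH] hu hs; first by split.
have [hp1 hi1] := step_pres hop hi0 hin hu hs.
have hu1 : uniq T1 by rewrite (perm_uniq hp1).
have hs1 : size T1 = n by rewrite (perm_size hp1).
have [hp2 hi2] := IH hu1 hs1.
split; first exact: perm_trans hp2 hp1.
move=> x y hx hy hxy hidx; apply: hi2; rewrite ?(perm_mem hp1) //.
exact: hi1.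
Qed.

Lemma uniq_skew a b : uniq (skew_cells a b).
Proof.
rewrite /skew_cells; elim: (iota 0 (size a)) (iota_uniq 0 (size a)) => [|x s IH] //= /andP [hx hs].
rewrite cat_uniq IH // andbT; apply/andP; split.
  by rewrite map_inj_uniq ?iota_uniq // => j j' [].
apply/hasPn => z /flatten_mapP [r hr] /mapP [j _ ->]; apply/negP => /mapP [j' _ [e _]].
by move: hx; rewrite -e hr.
Qed.

Theorem lemma3p1 (alpha beta : seq nat) :
  composition alpha -> composition beta -> subcomp beta alpha ->
  forall M : tableau, is_SET alpha beta M ->
  (minimal_SET alpha beta M <->
   forall i, 0 < i -> i < skew_size alpha beta ->
     let c := pos M i in let d := pos M i.+1 in
     (* (1) consecutive cells of the same row *)
     (d = (c.1, c.2.+1)) \/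
     (* (2) same column, i+1 above i, no cell of alpha/beta between them *)
     (d.2 = c.2 /\ c.1 < d.1 /\
      (forall r, c.1 < r -> r < d.1 -> ~~ in_skew alpha beta (r, c.2))) \/
     (* (3) i in a strictly higher row than i+1 *)
     (d.1 < c.1)).
Proof.
move=> _ _ hsub M hM.
have [hfill [hrow hcol]] := hM.
have hsz : size M = skew_size alpha beta by rewrite (perm_size hfill) size_skew.
have huM : uniq M by rewrite (perm_uniq hfill) uniq_skew.
have memM : forall z, (z \in M) = in_skew alpha beta z.
  by move=> z; rewrite (perm_mem hfill) mem_skew.
split.
- move=> [_ hnot] i hi0 hin /=.
  have hiM : i < size M by rewrite hsz.
  have hcM : pos M i \in M by apply: mem_nth; apply: leq_ltn_trans (leq_pred i) hiM.
  have hdM : pos M i.+1 \in M by rewrite /pos /= mem_nth.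
  have hec : entry M (pos M i) = i.
    by rewrite /entry /pos index_uniq ?prednK // (ltnW hiM).
  have hed : entry M (pos M i.+1) = i.+1 by rewrite /entry /pos /= index_uniq.
  have hpos1 : forall z, z \in M -> index z M = i.-1 -> z = pos M i.
    by move=> z hz e; rewrite -(nth_index (0,0) hz) e.
  have hpos2 : forall z, z \in M -> index z M = i -> z = pos M i.+1.
    by move=> z hz e; rewrite -(nth_index (0,0) hz) e.
  move: hcM hdM hec hed hpos1 hpos2.
  case Ec: (pos M i) => [r1 j1]; case Ed: (pos M i.+1) => [r2 j2] /=.
  move=> hcM hdM hec hed hpos1 hpos2.
  have hcs := hcM; rewrite memM in hcs.
  have hds := hdM; rewrite memM in hds.
  case: (ltngtP r1 r2) => hr.
  + case: (eqVneq j2 j1) => hj.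
    * subst j2; right; left; split => //; split => // r h1 h2; apply/negP => hs.
      have := hcol _ _ _ hcs hs h1; have := hcol _ _ _ hs hds h2.
      rewrite hec hed; lia.
    * exfalso; apply: hnot; exists (swap_entries i M).
      have hp := swap_perm huM hi0 hiM.
      have hmT : forall z, z \in swap_entries i M -> z \in M by move=> z; rewrite (perm_mem hp).
      split; [split; [exact: perm_trans hp hfill|split]|split].
      -- move=> r j j' h1 h2 hlt; have := hrow _ _ _ h1 h2 hlt.
         rewrite /entry !index_swap ?memM // !ltnS => h; apply: swlt2 => //.
         apply/negP => /andP [/eqP e1 /eqP e2].
         have := hpos1 _ _ e1; have := hpos2 _ _ e2; rewrite !memM => /(_ h2) [e3 _] /(_ h1) [e4 _].
         lia.
      -- move=> r r' j h1 h2 hlt; have := hcol _ _ _ h1 h2 hlt.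
         rewrite /entry !index_swap ?memM // !ltnS => h; apply: swlt2 => //.
         apply/negP => /andP [/eqP e1 /eqP e2].
         have := hpos1 _ _ e1; have := hpos2 _ _ e2; rewrite !memM => /(_ h2) [_ e3] /(_ h1) [_ e4].
         by move: hj; rewrite -e3 -e4 eqxx.
      -- move=> e; have : pos (swap_entries i M) i = pos M i by rewrite e.
         rewrite pos_swap1 //; change (nth (0,0) M i) with (pos M i.+1).
         rewrite Ec Ed => [[e1 _]]; lia.
      -- apply: (@pi_le_step _ _ M); last by constructor.
         exists i; split => //; split => //.
         rewrite /pi_op pos_swap1 ?size_swap // pos_swap2 ?size_swap //.
         change (nth (0,0) M i) with (pos M i.+1).
         change (nth (0,0) M i.-1) with (pos M i).
         rewrite Ec Ed /= ltnNge (ltnW hr) /= hr swap_invol //.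
  + by right; right.
  + subst r2; left.
    case: (ltngtP j1 j2) => hj.
    * case: (eqVneq j2 j1.+1) => [->|hj2] //.
      have he : in_skew alpha beta (r1, j1.+1).
        move: hcs hds; rewrite /in_skew /= => /and4P [a1 a2 a3 a4] /and4P [b1 b2 b3 b4].
        apply/and4P; split => //; lia.
      have := hrow _ _ _ hcs he (ltnSn _); have := hrow _ _ _ he hds ltac:(lia).
      rewrite hec hed; lia.
    * have := hrow _ _ _ hds hcs hj; rewrite hec hed; lia.
    * subst j2; move: hed; rewrite hec; lia.
- move=> hcond; split => // [[T [hT [hne hle]]]].
  case: (last_step hle) => [e|[W [i [h1 h2 h3 h4 h5]]]]; first by [].
  have [hT1 [hT2 hT3]] := hT.
  have huT : uniq T by rewrite (perm_uniq hT1) uniq_skew.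
  have hsT : size T = skew_size alpha beta by rewrite (perm_size hT1) size_skew.
  have [hpW hidx] := pres h1 huT hsT.
  have hsW : size W = skew_size alpha beta by rewrite (perm_size hpW).
  have huW : uniq W by rewrite (perm_uniq hpW).
  have hiW : i < size W by rewrite hsW.
  have := hcond i h2 h3 => /=.
  rewrite h5 pos_swap1 // pos_swap2 //.
  move: h4; rewrite /pos /=.
  have hxW : nth (0,0) W i \in W by rewrite mem_nth.
  have hyW : nth (0,0) W i.-1 \in W by rewrite mem_nth // (leq_ltn_trans (leq_pred i) hiW).
  have ix : index (nth (0,0) W i) W = i by rewrite index_uniq.
  have iy : index (nth (0,0) W i.-1) W = i.-1 by rewrite index_uniq // (leq_ltn_trans (leq_pred i) hiW).
  move: hxW hyW ix iy.
  case Ex: (nth (0,0) W i) => [rx jx]; case Ey: (nth (0,0) W i.-1) => [ry jy] /=.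
  move=> hxW hyW ix iy h4.
  case=> [[e _]|[[ej [_ _]]|hlt]].
  + lia.
  + subst jy.
    have hxT : (rx, jx) \in T by rewrite -(perm_mem hpW).
    have hyT : (ry, jx) \in T by rewrite -(perm_mem hpW).
    have hxs : in_skew alpha beta (rx, jx) by rewrite -mem_skew -(perm_mem hT1).
    have hys : in_skew alpha beta (ry, jx) by rewrite -mem_skew -(perm_mem hT1).
    have := hT3 _ _ _ hxs hys h4; rewrite /entry ltnS => h.
    have := hidx _ _ hxT hyT h4 h; rewrite ix iy; lia.
  + lia.
Qed.
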